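(* Let $X$ and $Y$ be non-negative absolutely continuous random variables with PDFs $f$ and $g$. Let $r>0$, $r\ne1$, $0<\alpha<\infty$, $\alpha\ne1$, $\beta>0$. Let $Y_{E,r}$ be the generalized escort random variable with PDF $\frac{f^r(x)g^{1-r}(x)}{\int_0^\infty f^r(t)g^{1-r}(t)\,dt}$, $x>0$, and let $X_{e,\alpha}$, $Y_{e,\alpha}$ be the escort random variables with PDFs $\frac{f^\alpha(x)}{\int_0^\infty f^\alpha(t)dt}$ and $\frac{g^\alpha(x)}{\int_0^\infty g^\alpha(t)dt}$, respectively. Then $$R^\alpha_\beta(Y_{E,r})\,RD^r_{\alpha\beta-\alpha+1}(X,Y)=(1-\alpha)\,R^\alpha_{r\beta-r+1}(X)\,R^\alpha_{(1-r)(\beta-1)+1}(Y)\,RD^r_\beta(X_{e,\alpha},Y_{e,\alpha}).$$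
   Context: For a non-negative absolutely continuous random variable $Z$ with PDF $h$, the Rényi information generating function is $R^a_b(Z)=\frac{1}{1-a}\left(\int_0^\infty h^a(x)\,dx\right)^{b-1}$ ($a>0$, $a\ne1$, $b>0$). For non-negative absolutely continuous random variables $U,V$ with PDFs $u,v$, the Rényi divergence information generating function is $RD^a_b(U,V)=\frac{1}{a-1}\left(\int_0^\infty u^a(x)v^{1-a}(x)\,dx\right)^{b-1}$ ($a>0$, $a\ne1$, $b>0$). All integrals are assumed to exist, be finite and positive. *)

(* Defs.v *)
From HB Require Import structures.
From mathcomp Require Import all_boot all_order all_algebra.
From mathcomp Require Import all_classical all_reals all_analysis.
Set Implicit Arguments. Unset Strict Implicit. Unset Printing Implicit Defensive.
Import Order.TTheory GRing.Theory Num.Theory.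
Local Open Scope classical_set_scope.
Local Open Scope ring_scope.

Section Defs.
Variable R : realType.

Definition pos_half : set R := `]0, +oo[%classic.

Definition int0oo (h : R -> R) : R := Rintegral lebesgue_measure pos_half h.

Definition intble0oo (h : R -> R) : Prop :=
  lebesgue_measure.-integrable pos_half (EFin \o h).

Definition renyi_igf (a b : R) (h : R -> R) : R :=
  (1 - a)^-1 * (int0oo (fun x => h x `^ a)) `^ (b - 1).

Definition renyi_div_igf (a b : R) (u v : R -> R) : R :=
  (a - 1)^-1 * (int0oo (fun x => u x `^ a * v x `^ (1 - a))) `^ (b - 1).

Definition escort (a : R) (f : R -> R) : R -> R :=
  fun x => f x `^ a / int0oo (fun t => f t `^ a).

Definition gen_escort (r : R) (f g : R -> R) : R -> R :=
  fun x => f x `^ r * g x `^ (1 - r) / int0oo (fun t => f t `^ r * g t `^ (1 - r)).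

Definition is_pdf0 (h : R -> R) : Prop :=
  (forall x, 0 < x -> 0 <= h x) /\ intble0oo h /\ int0oo h = 1.

Definition good_int (h : R -> R) : Prop := intble0oo h /\ 0 < int0oo h.

End Defs.

(* Main.v *)
Require Import Defs.
From mathcomp Require Import all_boot all_order all_algebra.
From mathcomp Require Import all_classical all_reals all_analysis.
From mathcomp Require Import ring lra.
Import Order.TTheory GRing.Theory Num.Theory.
Local Open Scope ring_scope.

Lemma pwE (R : realType) (x p : R) : 0 < x -> x `^ p = expR (p * ln x).
Proof. by move=> x0; rewrite /powR gt_eqF. Qed.

Lemma pw_div (R : realType) (u c p : R) : 0 <= u -> 0 < c ->
  (u / c) `^ p = u `^ p / c `^ p.
Proof.
move=> u0 c0; rewrite powRM //; last by rewrite invr_ge0 ltW.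
have -> : (c^-1) `^ p = (c `^ p)^-1.
  by rewrite -powR_inv1 ?ltW // -powRrM mulN1r powRN.
by [].
Qed.

Lemma alg_id (R : realFieldType) (a b x y z : R) : z != 0 -> x != 0 -> y != 0 ->
  a / x * (b / y) = a * b / z * (z / (x * y)).
Proof. by move=> hz hx hy; field; rewrite hx hy hz. Qed.

Lemma pointwise (R : realType) (fx gx I A B r al : R) :
  0 <= fx -> 0 <= gx -> 0 < I -> 0 < A -> 0 < B ->
  (fx `^ al / A) `^ r * (gx `^ al / B) `^ (1 - r) =
  (fx `^ r * gx `^ (1 - r) / I) `^ al * (I `^ al / (A `^ r * B `^ (1 - r))).
Proof.
move=> f0 g0 I0 A0 B0.
rewrite !pw_div ?powR_ge0 ?mulr_ge0 ?powR_ge0 // powRM ?powR_ge0 //.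
rewrite (powRAC fx al r) (powRAC gx al (1 - r)).
have hI : I `^ al != 0 by rewrite gt_eqF // powR_gt0.
have hA : A `^ r != 0 by rewrite gt_eqF // powR_gt0.
have hB : B `^ (1 - r) != 0 by rewrite gt_eqF // powR_gt0.
by apply: alg_id.
Qed.

Lemma lnKc (R : realType) (K I A B a r : R) : 0 < K -> 0 < I -> 0 < A -> 0 < B ->
  ln (K * (I `^ a / (A `^ r * B `^ (1 - r)))) =
  ln K + (a * ln I - (r * ln A + (1 - r) * ln B)).
Proof.
move=> K0 I0 A0 B0.
have h1 : 0 < I `^ a by rewrite powR_gt0.
have h2 : 0 < A `^ r by rewrite powR_gt0.
have h3 : 0 < B `^ (1 - r) by rewrite powR_gt0.
have h4 : 0 < A `^ r * B `^ (1 - r) by rewrite mulr_gt0.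
rewrite lnM ?posrE ?divr_gt0 //.
rewrite ln_div ?posrE // lnM ?posrE // !ln_powR.
by [].
Qed.

Lemma fin_alg (R : realFieldType) (a r X Y P Q W : R) : 1 - a != 0 -> r - 1 != 0 ->
  P * Q * W = X * Y ->
  (1 - a)^-1 * X * ((r - 1)^-1 * Y) =
  (1 - a) * ((1 - a)^-1 * Q) * ((1 - a)^-1 * W) * ((r - 1)^-1 * P).
Proof.
move=> ha hr h.
rewrite (_ : _ * _ * _ = (1 - a)^-1 * (r - 1)^-1 * (X * Y)); last by ring.
rewrite -h; field; by rewrite ha hr.
Qed.

Theorem proposition3p2 (R : realType) (f g : R -> R) (r alpha beta : R) :
  is_pdf0 f -> is_pdf0 g ->
  0 < r -> r != 1 -> 0 < alpha -> alpha != 1 -> 0 < beta ->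
  (* all integrals appearing below exist, are finite and positive *)
  good_int (fun x => f x `^ r * g x `^ (1 - r)) ->
  good_int (fun x => gen_escort r f g x `^ alpha) ->
  good_int (fun x => f x `^ alpha) ->
  good_int (fun x => g x `^ alpha) ->
  good_int (fun x => escort alpha f x `^ r * escort alpha g x `^ (1 - r)) ->
  renyi_igf alpha beta (gen_escort r f g) *
    renyi_div_igf r (alpha * beta - alpha + 1) f g =
  (1 - alpha) * renyi_igf alpha (r * beta - r + 1) f *
    renyi_igf alpha ((1 - r) * (beta - 1) + 1) g *
    renyi_div_igf r beta (escort alpha f) (escort alpha g).
Proof.
move=> [f0 _] [g0 _] r0 r1 a0 a1 b0 [_ I0] [iG K0] [_ A0] [_ B0] _.
set I := int0oo (fun x => f x `^ r * g x `^ (1 - r)) in I0 *.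
set A := int0oo (fun x => f x `^ alpha) in A0 *.
set B := int0oo (fun x => g x `^ alpha) in B0 *.
set K := int0oo (fun x => gen_escort r f g x `^ alpha) in K0 iG *.
set c := I `^ alpha / (A `^ r * B `^ (1 - r)).
have c0 : 0 < c by rewrite divr_gt0 ?mulr_gt0 ?powR_gt0.
have E : int0oo (fun x => escort alpha f x `^ r * escort alpha g x `^ (1 - r))
    = K * c.
  rewrite /int0oo /K /int0oo -RintegralZr //; last exact: measurable_itv.
  apply: eq_Rintegral => x; rewrite inE /pos_half /= in_itv /= andbT => x0.
  rewrite /escort /gen_escort -/A -/B -/I.
  by apply: pointwise => //; [exact: f0|exact: g0].
rewrite /renyi_igf /renyi_div_igf /escort -/A -/B.
rewrite -/(escort alpha f) -/(escort alpha g) E -/I -/K.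
have Kc0 : 0 < K * c by rewrite mulr_gt0.
rewrite !pwE //.
rewrite /c lnKc //.
set lK := ln K; set lI := ln I; set lA := ln A; set lB := ln B.
have h : expR ((beta - 1) * (lK + (alpha * lI - (r * lA + (1 - r) * lB))))
   * expR ((r * beta - r + 1 - 1) * lA) * expR (((1 - r) * (beta - 1) + 1 - 1) * lB)
   = expR ((beta - 1) * lK) * expR ((alpha * beta - alpha + 1 - 1) * lI).
  rewrite -!expRD; congr expR; ring.
have ha : 1 - alpha != 0 by rewrite subr_eq0 eq_sym.
have hr : r - 1 != 0 by rewrite subr_eq0.
exact: fin_alg.
Qed.
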